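(* For every well-typed CorePolyC program $p$ there is a polynomial $q$ such that $\mathrm{sz}([\![p]\!](\tilde v))\le q(\mathrm{sz}(\tilde v))$ for every input tuple $\tilde v$.
   Context: CorePolyC. Types are $\mathtt{iint},\mathtt{int},\mathtt{bool}$; $\mathsf{Int}=\{\mathtt{iint},\mathtt{int}\}$, ordered by $\mathtt{iint}\preccurlyeq\mathtt{int}$. Values are unbounded integers ($\mathbb Z$) and booleans $\#t,\#f$. Expressions: variables $x$; constants (nonempty decimal digit strings denoting natural numbers; $\mathtt{true}$, $\mathtt{false}$); operator applications $\mathtt{op}(e_1,\dots,e_m)$; parenthesized $(e)$. Operators and semantics: unary $-$ (negation); binary $+,-,/,\%$ (integer addition, subtraction, division, remainder, with division and remainder by $0$ returning $0$); $\mathtt{size}$, with $\mathtt{size}(v)=\lceil\log_2(\mathrm{abs}(v)+1)\rceil$; comparisons $\texttt{>=},\texttt{<=},\texttt{>},\texttt{<},\texttt{==},\texttt{!=}$ on integers returning booleans; boolean $\texttt{!},\texttt{\&\&},\texttt{||}$. Statements: declaration $t\ x;$; assignment $x=e;$; block $\{s_1\dots s_m\}$; conditional $\mathbf{if}(e)\ s_1\ \mathbf{else}\ s_2$; loop $\mathbf{for}(x<\mathtt{size}(e))\ s$ (loop bounds are always syntactically of the form $\mathtt{size}(e)$). A program is $\mathbf{int\ main}(\mathbf{int}\ x_1,\dots,\mathbf{int}\ x_m)\{s_1\dots s_k\ \mathbf{return}\ e;\}$. Semantics (big-step). A store $\Sigma$ is a finite partial map from variables to values; $\Sigma[x\mapsto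 v]$ is the update. $\Sigma\vdash e\Downarrow v$: a variable $x\in\mathrm{dom}\,\Sigma$ evaluates to $\Sigma(x)$, constants to their value, $\mathtt{op}(e_1,\dots,e_m)$ to $\mathtt{op}$ applied to the values of the $e_i$. $\Sigma\vdash s\Downarrow\Sigma'$: $t\ x;$ gives $\Sigma[x\mapsto 0]$ if $t\in\mathsf{Int}$ and $\Sigma[x\mapsto\#f]$ if $t=\mathtt{bool}$; $x=e;$ (with $x\in\mathrm{dom}\,\Sigma$) gives $\Sigma[x\mapsto v]$ where $\Sigma\vdash e\Downarrow v$; a sequence or block executes its statements in order threading the store (a block returns the final store); a conditional evaluates its guard to a boolean and executes the corresponding branch; $\mathbf{for}(x<e)\ s$ evaluates $e$ once to an integer $i$, sets $\Sigma_0=\Sigma$, executes $s$ from $\Sigma_j[x\mapsto j]$ obtaining $\Sigma_{j+1}$ for $j=0,\dots,i-1$, and ends in $\Sigma_i$ (i.e. in $\Sigma$ if $i\le 0$). A program on inputs $v_1,\dots,v_m$ runs its statements from the store $[x_1\mapsto v_1,\dots,x_m\mapsto v_m]$ and outputs the value of its return expression in the resulting store. Type system. A typing environment $\Gamma$ is a finite partial map from variables to types; $\ell\in\{\#t,\#f\}$ is the loop indicator. Expression typing $\Gamma,\ell\vdash e:t$: a variable $x\in\mathrm{dom}\,\Gamma$ has type $\Gamma(x)$; digit literals have type $\mathtt{iint}$, $\mathtt{true},\mathtt{false}$ have type $\mathtt{bool}$; $\texttt{!},\texttt{\&\&},\texttt{||}$ take $\mathtt{bool}$ arguments to $\mathtt{bool}$;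 comparisons take arguments with types in $\mathsf{Int}$ to $\mathtt{bool}$; $+,-,/,\%$ take arguments with types in $\mathsf{Int}$ to their supremum under $\preccurlyeq$ ($\mathtt{iint}$ iff all arguments are $\mathtt{iint}$); $\mathtt{size}$ takes only an $\mathtt{iint}$ argument, giving $\mathtt{iint}$; parentheses preserve types. Statement typing $\Gamma,\ell\vdash s:\Gamma'$: $t\ x;$ is typable iff $x\notin\mathrm{dom}\,\Gamma$ and not($\ell=\#t$ and $t=\mathtt{iint}$), giving $\Gamma[x\mapsto t]$; $x=e;$ is typable iff $x\in\mathrm{dom}\,\Gamma$, not($\ell=\#t$ and $\Gamma(x)=\mathtt{iint}$), and $\Gamma,\ell\vdash e:t$ with $t,\Gamma(x)$ both in $\mathsf{Int}$ or both $\mathtt{bool}$, giving $\Gamma$; a sequence $s_1\dots s_m$ threads $\Gamma_0=\Gamma$, $\Gamma_{i-1},\ell\vdash s_i:\Gamma_i$, giving $\Gamma_m$; a block $\{\tilde s\}$ is typable if its sequence is, giving $\Gamma$; a conditional needs a guard of type $\mathtt{bool}$ and both branches typable under $\Gamma,\ell$, giving $\Gamma$; $\mathbf{for}(x<e)\ s$ needs $\Gamma,\ell\vdash e:\mathtt{iint}$, $x\notin\mathrm{dom}\,\Gamma$, and $\Gamma[x\mapsto\mathtt{iint}],\#t\vdash s:\Gamma'$ for some $\Gamma'$, giving $\Gamma$. A program is well-typed if its statements are typable starting from $[x_1\mapsto\mathtt{int},\dots,x_m\mapsto\mathtt{int}]$ with $\ell=\#f$, ending in some $\Gamma'$, and its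 return expression has a type in $\mathsf{Int}$ under $\Gamma',\#f$. A well-typed program $p$ with $m$ inputs computes a total function $[\![p]\!]:\mathbb Z^m\to\mathbb Z$. Sizes: $\mathrm{sz}(v)=\lceil\log_2(\mathrm{abs}(v)+1)\rceil$ for $v\in\mathbb Z$, and $\mathrm{sz}(v_1,\dots,v_m)=\sum_i\mathrm{sz}(v_i)$. *)

(* Defs.v *)
From Stdlib Require Import ZArith List Bool.
Import ListNotations.
Open Scope Z_scope.

Definition var := nat.

Inductive typ := TIint | TInt | TBool.

Definition is_Int (t : typ) : bool :=
  match t with TIint | TInt => true | TBool => false end.

(* supremum w.r.t. iint <= int (only used on Int types) *)
Definition sup (t1 t2 : typ) : typ :=
  match t1, t2 with TIint, TIint => TIint | _, _ => TInt end.

Inductive unop := UNeg | USize | UNot.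
Inductive binop :=
  | BAdd | BSub | BDiv | BMod
  | BGe | BLe | BGt | BLt | BEq | BNe
  | BAnd | BOr.

Inductive expr :=
  | EVar (x : var)
  | ENum (n : nat)          (* nonempty decimal digit string, denoting n *)
  | ETrue | EFalse
  | EUn (o : unop) (e : expr)
  | EBin (o : binop) (e1 e2 : expr)
  | EParen (e : expr).

(* [SFor x e s] is the loop  for(x < size(e)) s  (loop bounds are always
   syntactically of the form size(e)). *)
Inductive stmt :=
  | SDecl (t : typ) (x : var)
  | SAssign (x : var) (e : expr)
  | SBlock (ss : list stmt)
  | SIf (e : expr) (s1 s2 : stmt)
  | SFor (x : var) (e : expr) (s : stmt).

Record program := Program {
  params : list var;
  body : list stmt;
  ret : expr }.

Inductive val := VInt (z : Z) | VBool (b : bool).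

Definition sz (v : Z) : Z := Z.log2_up (Z.abs v + 1).
Definition sz_tuple (vs : list Z) : Z := fold_right (fun v acc => sz v + acc) 0 vs.

Definition store := var -> option val.
Definition upd {A} (m : var -> option A) (x : var) (a : A) : var -> option A :=
  fun y => if Nat.eqb y x then Some a else m y.
Definition empty {A} : var -> option A := fun _ => None.

Definition zdiv (a b : Z) : Z := if b =? 0 then 0 else Z.quot a b.
Definition zmod (a b : Z) : Z := if b =? 0 then 0 else Z.rem a b.

Definition unop_sem (o : unop) (v : val) : option val :=
  match o, v with
  | UNeg, VInt z => Some (VInt (- z))
  | USize, VInt z => Some (VInt (sz z))
  | UNot, VBool b => Some (VBool (negb b))
  | _, _ => None
  end.

Definition binop_sem (o : binop) (v1 v2 : val) : option val :=
  match o, v1, v2 with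
  | BAdd, VInt a, VInt b => Some (VInt (a + b))
  | BSub, VInt a, VInt b => Some (VInt (a - b))
  | BDiv, VInt a, VInt b => Some (VInt (zdiv a b))
  | BMod, VInt a, VInt b => Some (VInt (zmod a b))
  | BGe, VInt a, VInt b => Some (VBool (b <=? a))
  | BLe, VInt a, VInt b => Some (VBool (a <=? b))
  | BGt, VInt a, VInt b => Some (VBool (b <? a))
  | BLt, VInt a, VInt b => Some (VBool (a <? b))
  | BEq, VInt a, VInt b => Some (VBool (a =? b))
  | BNe, VInt a, VInt b => Some (VBool (negb (a =? b)))
  | BAnd, VBool a, VBool b => Some (VBool (a && b))
  | BOr, VBool a, VBool b => Some (VBool (a || b))
  | _, _, _ => None
  end.

(* Sigma |- e ⇓ v  (as a partial function; deterministic by construction) *)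
Fixpoint eval (S : store) (e : expr) : option val :=
  match e with
  | EVar x => S x
  | ENum n => Some (VInt (Z.of_nat n))
  | ETrue => Some (VBool true)
  | EFalse => Some (VBool false)
  | EUn o e1 =>
      match eval S e1 with Some v => unop_sem o v | None => None end
  | EBin o e1 e2 =>
      match eval S e1, eval S e2 with
      | Some v1, Some v2 => binop_sem o v1 v2
      | _, _ => None
      end
  | EParen e1 => eval S e1
  end.

Inductive exec : store -> stmt -> store -> Prop :=
  | ExDecl : forall S t x,
      exec S (SDecl t x) (upd S x (if is_Int t then VInt 0 else VBool false))
  | ExAssign : forall S x e v,
      S x <> None -> eval S e = Some v -> exec S (SAssign x e) (upd S x v)
  | ExBlock : forall S ss S', exec_seq S ss S' -> exec S (SBlock ss) S'
  | ExIfT : forall S e s1 s2 S',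
      eval S e = Some (VBool true) -> exec S s1 S' -> exec S (SIf e s1 s2) S'
  | ExIfF : forall S e s1 s2 S',
      eval S e = Some (VBool false) -> exec S s2 S' -> exec S (SIf e s1 s2) S'
  | ExFor : forall S x e s i S',
      eval S (EUn USize e) = Some (VInt i) ->
      exec_loop x s 0 (Z.to_nat i) S S' ->
      exec S (SFor x e s) S'
with exec_seq : store -> list stmt -> store -> Prop :=
  | ExNil : forall S, exec_seq S [] S
  | ExCons : forall S s ss S1 S2,
      exec S s S1 -> exec_seq S1 ss S2 -> exec_seq S (s :: ss) S2
(* exec_loop x s j n Sigma_j Sigma_n: iterations j, ..., n-1 *)
with exec_loop : var -> stmt -> nat -> nat -> store -> store -> Prop :=
  | ExLoopDone : forall x s j n S, (n <= j)%nat -> exec_loop x s j n S S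
  | ExLoopStep : forall x s j n S S1 S2,
      (j < n)%nat ->
      exec (upd S x (VInt (Z.of_nat j))) s S1 ->
      exec_loop x s (Datatypes.S j) n S1 S2 ->
      exec_loop x s j n S S2.

Fixpoint init_store (xs : list var) (vs : list Z) : store :=
  match xs, vs with
  | x :: xs', v :: vs' => upd (init_store xs' vs') x (VInt v)
  | _, _ => empty
  end.

Definition runs (p : program) (vs : list Z) (z : Z) : Prop :=
  length vs = length (params p) /\
  exists S', exec_seq (init_store (params p) vs) (body p) S' /\
             eval S' (ret p) = Some (VInt z).

Definition tenv := var -> option typ.

Inductive has_type (G : tenv) (l : bool) : expr -> typ -> Prop :=
  | TyVar : forall x t, G x = Some t -> has_type G l (EVar x) t
  | TyNum : forall n, has_type G l (ENum n) TIint
  | TyTrue : has_type G l ETrue TBool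
  | TyFalse : has_type G l EFalse TBool
  | TyNot : forall e, has_type G l e TBool -> has_type G l (EUn UNot e) TBool
  | TyNeg : forall e t, has_type G l e t -> is_Int t = true ->
      has_type G l (EUn UNeg e) t
  | TySize : forall e, has_type G l e TIint -> has_type G l (EUn USize e) TIint
  | TyBool2 : forall o e1 e2, In o [BAnd; BOr] ->
      has_type G l e1 TBool -> has_type G l e2 TBool ->
      has_type G l (EBin o e1 e2) TBool
  | TyCmp : forall o e1 e2 t1 t2, In o [BGe; BLe; BGt; BLt; BEq; BNe] ->
      has_type G l e1 t1 -> has_type G l e2 t2 ->
      is_Int t1 = true -> is_Int t2 = true ->
      has_type G l (EBin o e1 e2) TBool
  | TyArith : forall o e1 e2 t1 t2, In o [BAdd; BSub; BDiv; BMod] ->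
      has_type G l e1 t1 -> has_type G l e2 t2 ->
      is_Int t1 = true -> is_Int t2 = true ->
      has_type G l (EBin o e1 e2) (sup t1 t2)
  | TyParen : forall e t, has_type G l e t -> has_type G l (EParen e) t.

Definition compatible (t1 t2 : typ) : Prop :=
  (is_Int t1 = true /\ is_Int t2 = true) \/ (t1 = TBool /\ t2 = TBool).

Inductive stmt_type : tenv -> bool -> stmt -> tenv -> Prop :=
  | StDecl : forall G l t x,
      G x = None -> ~ (l = true /\ t = TIint) ->
      stmt_type G l (SDecl t x) (upd G x t)
  | StAssign : forall G l x e tx te,
      G x = Some tx -> ~ (l = true /\ tx = TIint) ->
      has_type G l e te -> compatible te tx ->
      stmt_type G l (SAssign x e) G
  | StBlock : forall G l ss G', seq_type G l ss G' -> stmt_type G l (SBlock ss) G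
  | StIf : forall G l e s1 s2 G1 G2,
      has_type G l e TBool -> stmt_type G l s1 G1 -> stmt_type G l s2 G2 ->
      stmt_type G l (SIf e s1 s2) G
  | StFor : forall G l x e s G',
      has_type G l (EUn USize e) TIint -> G x = None ->
      stmt_type (upd G x TIint) true s G' ->
      stmt_type G l (SFor x e s) G
with seq_type : tenv -> bool -> list stmt -> tenv -> Prop :=
  | SqNil : forall G l, seq_type G l [] G
  | SqCons : forall G l s ss G1 G2,
      stmt_type G l s G1 -> seq_type G1 l ss G2 -> seq_type G l (s :: ss) G2.

Fixpoint init_tenv (xs : list var) : tenv :=
  match xs with
  | [] => empty
  | x :: xs' => upd (init_tenv xs') x TInt
  end.

Definition well_typed (p : program) : Prop :=
  exists G' t, seq_type (init_tenv (params p)) false (body p) G' /\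
               has_type G' false (ret p) t /\ is_Int t = true.

(* polynomials with integer coefficients, c0 + c1 x + ... *)
Definition peval (cs : list Z) (x : Z) : Z :=
  fold_right (fun c acc => c + x * acc) 0 cs.

(* Main.v *)
Require Import Defs.
From Stdlib Require Import ZArith List Lia.
Import ListNotations.
Open Scope Z_scope.

Lemma quot_abs_le a b : b <> 0 -> Z.abs (Z.quot a b) <= Z.abs a.
Proof.
  intros Hb. rewrite <- Z.quot_abs by auto.
  rewrite Z.quot_div_nonneg by lia.
  apply Z.div_le_upper_bound; nia.
Qed.

Lemma rem_abs_le a b : b <> 0 -> Z.abs (Z.rem a b) <= Z.abs a.
Proof.
  intros Hb. rewrite <- Z.rem_abs by auto. apply Z.rem_le; lia.
Qed.

Lemma lin_pow n : 0 <= n -> n + 1 <= 2 ^ n.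
Proof. intros. pose proof (Z.pow_gt_lin_r 2 n). lia. Qed.

Lemma sz_nonneg z : 0 <= sz z.
Proof. unfold sz. apply Z.log2_up_nonneg. Qed.

Lemma sz_le_abs z : sz z <= Z.abs z.
Proof.
  unfold sz. apply Z.log2_up_le_pow2. lia. apply lin_pow. lia.
Qed.

Lemma abs_le_pow_sz z : Z.abs z <= 2 ^ sz z.
Proof.
  unfold sz. assert (H: Z.abs z + 1 <= 2 ^ Z.log2_up (Z.abs z + 1)).
  { destruct (Z.eq_dec (Z.abs z) 0) as [E|E].
    - rewrite E. simpl. lia.
    - apply Z.log2_up_spec. lia. }
  lia.
Qed.

Lemma sz_le_of_abs z b : 0 <= b -> Z.abs z <= 2 ^ b -> sz z <= b + 1.
Proof.
  intros Hb H. unfold sz. apply Z.log2_up_le_pow2. lia.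
  rewrite Z.pow_add_r by lia. pose proof (Z.pow_pos_nonneg 2 b). lia.
Qed.

Lemma unop_bound o v z : unop_sem o v = Some (VInt z) ->
  exists a, v = VInt a /\ Z.abs z <= Z.abs a.
Proof.
  destruct o, v; simpl; intro H; inversion H; subst; eexists; split; eauto.
  - lia.
  - pose proof (sz_le_abs z0). pose proof (sz_nonneg z0). lia.
Qed.

Lemma binop_bound o v1 v2 z : binop_sem o v1 v2 = Some (VInt z) ->
  exists a b, v1 = VInt a /\ v2 = VInt b /\ Z.abs z <= Z.abs a + Z.abs b.
Proof.
  destruct o, v1, v2; simpl; intro H; inversion H; subst; do 2 eexists; split; eauto; split; eauto.
  - lia.
  - lia.
  - unfold zdiv. destruct (Z.eqb_spec z1 0). simpl; lia.
    pose proof (quot_abs_le z0 z1 n). lia.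
  - unfold zmod. destruct (Z.eqb_spec z1 0). simpl; lia.
    pose proof (rem_abs_le z0 z1 n). lia.
Qed.

Fixpoint ek (e : expr) : Z :=
  match e with
  | EVar _ => 1
  | ENum n => Z.of_nat n
  | ETrue | EFalse => 0
  | EUn _ e1 => ek e1
  | EBin _ e1 e2 => ek e1 + ek e2
  | EParen e1 => ek e1
  end.

Lemma ek_nonneg e : 0 <= ek e.
Proof. induction e; simpl; lia. Qed.

Definition Bnd (b : Z) (S : store) : Prop :=
  forall x z, S x = Some (VInt z) -> Z.abs z <= 2 ^ b.

Definition IInv (c : Z) (G : tenv) (S : store) : Prop :=
  forall x z, G x = Some TIint -> S x = Some (VInt z) -> Z.abs z <= 2 ^ c.

Lemma pow_mono a b : 0 <= a <= b -> 2 ^ a <= 2 ^ b.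
Proof. intros. apply Z.pow_le_mono_r; lia. Qed.

Lemma Bnd_mono b b' S : Bnd b S -> 0 <= b <= b' -> Bnd b' S.
Proof. unfold Bnd; intros H Hb x z Hx. specialize (H x z Hx). pose proof (pow_mono b b'). lia. Qed.

Lemma IInv_mono c c' G S : IInv c G S -> 0 <= c <= c' -> IInv c' G S.
Proof. unfold IInv; intros H Hb x z Hx Hs. specialize (H x z Hx Hs). pose proof (pow_mono c c'). lia. Qed.

Lemma eval_bound S b e z : Bnd b S -> 0 <= b -> eval S e = Some (VInt z) ->
  Z.abs z <= ek e * 2 ^ b.
Proof.
  intros HB Hb. pose proof (Z.pow_pos_nonneg 2 b ltac:(lia) Hb) as Hp.
  revert z; induction e; cbn [eval ek]; intros z H.
  - specialize (HB _ _ H). lia.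
  - inversion H; subst. pose proof (Nat2Z.is_nonneg n). rewrite Z.abs_eq by lia. nia.
  - discriminate.
  - discriminate.
  - destruct (eval S e) as [v|] eqn:E; [|discriminate].
    destruct (unop_bound _ _ _ H) as [a [-> Ha]]. specialize (IHe a eq_refl). lia.
  - destruct (eval S e1) as [v1|] eqn:E1; [|discriminate].
    destruct (eval S e2) as [v2|] eqn:E2; [|discriminate].
    destruct (binop_bound _ _ _ _ H) as [a [c [-> [-> Ha]]]].
    specialize (IHe1 a eq_refl). specialize (IHe2 c eq_refl). lia.
  - auto.
Qed.

Lemma eval_bound_iint G l S c e t : has_type G l e t -> t = TIint ->
  IInv c G S -> 0 <= c -> forall z, eval S e = Some (VInt z) ->
  Z.abs z <= ek e * 2 ^ c.
Proof.
  intros HT Ht HI Hc. pose proof (Z.pow_pos_nonneg 2 c ltac:(lia) Hc) as Hp.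
  induction HT; subst; cbn [eval ek]; intros z Hev; try discriminate.
  - specialize (HI _ _ H Hev). lia.
  - inversion Hev; subst. pose proof (Nat2Z.is_nonneg n). rewrite Z.abs_eq by lia. nia.
  - destruct (eval S e) as [v|] eqn:E; [|discriminate].
    destruct (unop_bound _ _ _ Hev) as [a [-> Ha]]. specialize (IHHT eq_refl a eq_refl). lia.
  - destruct (eval S e) as [v|] eqn:E; [|discriminate].
    destruct (unop_bound _ _ _ Hev) as [a [-> Ha]]. specialize (IHHT eq_refl a eq_refl). lia.
  - destruct t1, t2; simpl in Ht; try discriminate.
    destruct (eval S e1) as [v1|] eqn:E1; [|discriminate].
    destruct (eval S e2) as [v2|] eqn:E2; [|discriminate].
    destruct (binop_bound _ _ _ _ Hev) as [a [d [-> [-> Ha]]]].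
    specialize (IHHT1 eq_refl a eq_refl). specialize (IHHT2 eq_refl d eq_refl). lia.
  - auto.
Qed.

Scheme exec_mut := Induction for exec Sort Prop
with exec_seq_mut := Induction for exec_seq Sort Prop
with exec_loop_mut := Induction for exec_loop Sort Prop.
Combined Scheme exec_comb from exec_mut, exec_seq_mut, exec_loop_mut.

Scheme st_mut := Induction for stmt_type Sort Prop
with sq_mut := Induction for seq_type Sort Prop.
Combined Scheme st_comb from st_mut, sq_mut.

Lemma upd_eq {A} (m : var -> option A) x a : upd m x a x = Some a.
Proof. unfold upd. rewrite Nat.eqb_refl. auto. Qed.

Lemma upd_neq {A} (m : var -> option A) x y a : y <> x -> upd m x a y = m y.
Proof. unfold upd. intros H. destruct (Nat.eqb_spec y x); congruence. Qed.

Lemma ty_ext :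
  (forall G l s G', stmt_type G l s G' -> forall y t, G y = Some t -> G' y = Some t) /\
  (forall G l ss G', seq_type G l ss G' -> forall y t, G y = Some t -> G' y = Some t).
Proof.
  apply st_comb; intros; auto.
  rewrite upd_neq; congruence.
Qed.

Lemma ty_rev :
  (forall G l s G', stmt_type G l s G' -> l = true -> forall y, G' y = Some TIint -> G y = Some TIint) /\
  (forall G l ss G', seq_type G l ss G' -> l = true -> forall y, G' y = Some TIint -> G y = Some TIint).
Proof.
  apply st_comb; try (intros; subst; eauto; fail).
  intros G l t x Hx Hn Hl y Hy. subst.
  unfold upd in Hy. destruct (Nat.eqb_spec y x); subst; auto.
  inversion Hy; subst. exfalso; auto.
Qed.

Lemma frozen :
  (forall S s S', exec S s S' -> forall G G', stmt_type G true s G' ->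
     forall y, G y = Some TIint -> S' y = S y) /\
  (forall S ss S', exec_seq S ss S' -> forall G G', seq_type G true ss G' ->
     forall y, G y = Some TIint -> S' y = S y) /\
  (forall x s j n S S', exec_loop x s j n S S' -> forall G G'',
     stmt_type (upd G x TIint) true s G'' -> G x = None ->
     forall y, G y = Some TIint -> S' y = S y).
Proof.
  apply exec_comb.
  - intros S t x G G' HT y Hy. inversion HT; subst. apply upd_neq. congruence.
  - intros S x e v Hn He G G' HT y Hy. inversion HT; subst. apply upd_neq.
    intro; subst. rewrite Hy in H1; inversion H1; subst. auto.
  - intros S ss S' Hs IH G G' HT y Hy. inversion HT; subst. eauto.
  - intros S e s1 s2 S' He Hs IH G G' HT y Hy. inversion HT; subst. eauto.
  - intros S e s1 s2 S' He Hs IH G G' HT y Hy. inversion HT; subst. eauto.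
  - intros S x e s i S' He Hl IH G G' HT y Hy. inversion HT; subst. eauto.
  - auto.
  - intros S s ss S1 S2 Hs IH Hss IH2 G G' HT y Hy. inversion HT; subst.
    rewrite (IH2 G1 G' H5 y).
    + eapply IH; eauto.
    + eapply (proj1 ty_ext); eauto.
  - auto.
  - intros x s j n S S1 S2 Hlt Hs IH Hl IH2 G G'' HT HGx y Hy.
    rewrite (IH2 G G'' HT HGx y Hy).
    assert (y <> x) by congruence.
    rewrite (IH _ _ HT y) by (rewrite upd_neq; auto). apply upd_neq; auto.
Qed.

Fixpoint g (s : stmt) (c : Z) : Z := Z.max 0 (match s with
  | SDecl _ _ => 0
  | SAssign _ e => ek e
  | SBlock ss => fold_right (fun s' acc => g s' c + acc) 0 ss
  | SIf _ s1 s2 => g s1 c + g s2 c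
  | SFor _ e s0 => ek e + 1 + (c + ek e + 1) * g s0 (c + ek e + 1)
  end).

Definition gseq (ss : list stmt) (c : Z) : Z := fold_right (fun s' acc => g s' c + acc) 0 ss.

Lemma g_nonneg s c : 0 <= g s c.
Proof. destruct s; cbn [g]; lia. Qed.

Lemma gseq_nonneg ss c : 0 <= gseq ss c.
Proof. induction ss; simpl; [lia|]. pose proof (g_nonneg a c). unfold gseq in *. lia. Qed.

Lemma g_block ss c : g (SBlock ss) c = Z.max 0 (gseq ss c).
Proof. reflexivity. Qed.

Lemma g_for x e s c : g (SFor x e s) c =
  Z.max 0 (ek e + 1 + (c + ek e + 1) * g s (c + ek e + 1)).
Proof. reflexivity. Qed.

Lemma Bnd_upd b S x z : Bnd b S -> Z.abs z <= 2 ^ b -> Bnd b (upd S x (VInt z)).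
Proof. unfold Bnd, upd; intros H Hz y w Hy. destruct (Nat.eqb y x); [inversion Hy; subst; auto | eauto]. Qed.

Lemma Bnd_updb b S x v : Bnd b S -> Bnd b (upd S x (VBool v)).
Proof. unfold Bnd, upd; intros H y w Hy. destruct (Nat.eqb y x); [discriminate | eauto]. Qed.

Lemma Bnd_updv b S x v : Bnd b S -> (forall z, v = VInt z -> Z.abs z <= 2 ^ b) -> Bnd b (upd S x v).
Proof. intros. destruct v. apply Bnd_upd; auto. apply Bnd_updb; auto. Qed.

Lemma mul_pow z k b : 0 <= k -> 0 <= b -> Z.abs z <= k * 2 ^ b -> Z.abs z <= 2 ^ (b + k).
Proof.
  intros Hk Hb H. rewrite Z.pow_add_r by lia. pose proof (lin_pow k Hk).
  pose proof (Z.pow_pos_nonneg 2 b ltac:(lia) Hb). nia.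
Qed.

Lemma loop_count S e i c : forall G l, has_type G l (EUn USize e) TIint -> IInv c G S -> 0 <= c ->
  eval S (EUn USize e) = Some (VInt i) -> 0 <= i <= c + ek e + 1.
Proof.
  intros G l HT HI Hc He. cbn [eval] in He.
  destruct (eval S e) as [v|] eqn:E; [|discriminate].
  destruct v; simpl in He; inversion He; subst.
  inversion HT; subst.
  pose proof (eval_bound_iint _ _ _ _ _ _ H0 eq_refl HI Hc _ E).
  pose proof (ek_nonneg e).
  pose proof (mul_pow _ _ _ H1 Hc H).
  split. apply sz_nonneg. pose proof (sz_le_of_abs z (c + ek e)). lia.
Qed.

Lemma lemA :
  (forall S s S', exec S s S' -> forall G G' c b, stmt_type G true s G' ->
     IInv c G S -> Bnd b S -> 0 <= c <= b -> Bnd (b + g s c) S') /\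
  (forall S ss S', exec_seq S ss S' -> forall G G' c b, seq_type G true ss G' ->
     IInv c G S -> Bnd b S -> 0 <= c <= b -> Bnd (b + gseq ss c) S') /\
  (forall x s j n S S', exec_loop x s j n S S' -> forall G G'' c1 b,
     stmt_type (upd G x TIint) true s G'' -> G x = None ->
     IInv c1 G S -> Bnd b S -> 0 <= c1 <= b -> Z.of_nat n <= c1 ->
     Bnd (b + Z.of_nat (n - j) * g s c1) S').
Proof.
  apply exec_comb.
  - intros S t x G G' c b HT HI HB Hc. cbn [g].
    apply Bnd_updv. eapply Bnd_mono; eauto; lia.
    intros z Hz. destruct t; simpl in Hz; inversion Hz; subst; simpl;
    pose proof (Z.pow_pos_nonneg 2 (b + 0)); lia.
  - intros S x e v Hn He G G' c b HT HI HB Hc.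
    pose proof (g_nonneg (SAssign x e) c). pose proof (ek_nonneg e).
    apply Bnd_updv. eapply Bnd_mono; eauto; lia.
    intros z Hz; subst. pose proof (eval_bound _ _ _ _ HB ltac:(lia) He).
    assert (Hb0 : 0 <= b) by lia. pose proof (mul_pow _ _ _ H0 Hb0 H1).
    assert (ek e <= g (SAssign x e) c) by (cbn [g]; lia).
    pose proof (pow_mono (b + ek e) (b + g (SAssign x e) c)). lia.
  - intros S ss S' Hs IH G G' c b HT HI HB Hc. inversion HT; subst.
    rewrite g_block. eapply Bnd_mono. eapply IH; eauto.
    pose proof (gseq_nonneg ss c). lia.
  - intros S e s1 s2 S' He Hs IH G G' c b HT HI HB Hc. inversion HT; subst.
    eapply Bnd_mono. eapply IH; eauto.
    pose proof (g_nonneg s1 c). pose proof (g_nonneg s2 c). cbn [g]. lia.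
  - intros S e s1 s2 S' He Hs IH G G' c b HT HI HB Hc. inversion HT; subst.
    eapply Bnd_mono. eapply IH; eauto.
    pose proof (g_nonneg s1 c). pose proof (g_nonneg s2 c). cbn [g]. lia.
  - intros S x e s i S' He Hl IH G G' c b HT HI HB Hc. inversion HT; subst.
    pose proof (loop_count _ _ _ _ _ _ H4 HI ltac:(lia) He) as Hi.
    pose proof (ek_nonneg e) as Hek.
    pose proof (g_nonneg s (c + ek e + 1)) as Hg.
    specialize (IH G' G'0 (c + ek e + 1) (b + ek e + 1) H7 H6).
    rewrite Nat.sub_0_r in IH. rewrite Z2Nat.id in IH by lia.
    eapply Bnd_mono. apply IH.
    + eapply IInv_mono; eauto; lia.
    + eapply Bnd_mono; eauto; lia.
    + lia.
    + lia.
    + rewrite g_for. nia.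
  - intros S G G' c b HT HI HB Hc. eapply Bnd_mono; eauto. unfold gseq; simpl; lia.
  - intros S s ss S1 S2 Hs IH Hss IH2 G G' c b HT HI HB Hc. inversion HT; subst.
    pose proof (g_nonneg s c). pose proof (gseq_nonneg ss c).
    eapply Bnd_mono. eapply IH2 with (c := c); eauto.
    + intros y z Hy Hz. assert (G y = Some TIint) by (eapply (proj1 ty_rev); eauto).
      rewrite (proj1 frozen _ _ _ Hs _ _ H3 y H1) in Hz. eauto.
    + lia.
    + unfold gseq; simpl; fold (gseq ss c). lia.
  - intros x s j n S Hnj G G'' c1 b HT Hx HI HB Hc Hn.
    replace (n - j)%nat with 0%nat by lia. eapply Bnd_mono; eauto; lia.
  - intros x s j n S S1 S2 Hjn Hs IH Hl IH2 G G'' c1 b HT Hx HI HB Hc Hn.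
    pose proof (g_nonneg s c1) as Hg.
    assert (Hj : 0 <= Z.of_nat j <= c1) by lia.
    assert (Hjp : Z.abs (Z.of_nat j) <= 2 ^ c1).
    { pose proof (lin_pow c1 ltac:(lia)). lia. }
    assert (HI1 : IInv c1 (upd G x TIint) (upd S x (VInt (Z.of_nat j)))).
    { intros y z Hy Hz. unfold upd in Hy, Hz. destruct (Nat.eqb y x).
      - inversion Hz; subst. auto.
      - eauto. }
    assert (HB1 : Bnd b (upd S x (VInt (Z.of_nat j)))).
    { apply Bnd_upd; auto. pose proof (pow_mono c1 b). lia. }
    specialize (IH _ _ c1 b HT HI1 HB1 Hc).
    assert (HI2 : IInv c1 G S1).
    { intros y z Hy Hz. assert (y <> x) by congruence.
      rewrite (proj1 frozen _ _ _ Hs _ _ HT y) in Hz by (rewrite upd_neq; auto).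
      rewrite upd_neq in Hz by auto. eauto. }
    specialize (IH2 G G'' c1 (b + g s c1) HT Hx HI2 IH ltac:(lia) Hn).
    replace (b + Z.of_nat (n - j) * g s c1) with (b + g s c1 + Z.of_nat (n - Datatypes.S j) * g s c1); auto.
    replace (n - j)%nat with (Datatypes.S (n - Datatypes.S j)) by lia. rewrite Nat2Z.inj_succ. lia.
Qed.

Fixpoint F (s : stmt) (b : Z) : Z := Z.max b (match s with
  | SDecl _ _ => b
  | SAssign _ e => b + ek e
  | SBlock ss => fold_left (fun acc s' => F s' acc) ss b
  | SIf _ s1 s2 => Z.max (F s1 b) (F s2 b)
  | SFor x e s0 => b + g (SFor x e s0) b
  end).

Definition Fseq (ss : list stmt) (b : Z) : Z := fold_left (fun acc s' => F s' acc) ss b.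

Lemma F_ge s b : b <= F s b.
Proof. destruct s; cbn [F]; lia. Qed.

Lemma Fseq_ge ss b : b <= Fseq ss b.
Proof.
  revert b; induction ss; intros b; simpl. lia.
  unfold Fseq in *; simpl. specialize (IHss (F a b)). pose proof (F_ge a b). lia.
Qed.

Lemma IInv_upd c G S x t v : IInv c G S -> (forall z, v = VInt z -> Z.abs z <= 2 ^ c) ->
  IInv c (upd G x t) (upd S x v).
Proof.
  unfold IInv, upd; intros H Hv y z Hy Hz. destruct (Nat.eqb y x).
  - inversion Hz; subst; auto.
  - eauto.
Qed.

Lemma IInv_updS c G S x v : IInv c G S -> (forall z, v = VInt z -> Z.abs z <= 2 ^ c) ->
  IInv c G (upd S x v).
Proof.
  unfold IInv, upd; intros H Hv y z Hy Hz. destruct (Nat.eqb y x).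
  - inversion Hz; subst; auto.
  - eauto.
Qed.

Lemma IInv_sub c G G1 S : IInv c G1 S -> (forall y, G y = Some TIint -> G1 y = Some TIint) -> IInv c G S.
Proof. unfold IInv; eauto. Qed.

Lemma lemB :
  (forall S s S', exec S s S' -> forall G G' l b, stmt_type G l s G' ->
     IInv b G S -> Bnd b S -> 0 <= b -> Bnd (F s b) S' /\ IInv (F s b) G' S') /\
  (forall S ss S', exec_seq S ss S' -> forall G G' l b, seq_type G l ss G' ->
     IInv b G S -> Bnd b S -> 0 <= b -> Bnd (Fseq ss b) S' /\ IInv (Fseq ss b) G' S') /\
  (forall x s j n S S', exec_loop x s j n S S' -> True).
Proof.
  apply exec_comb; auto.
  - intros S t x G G' l b HT HI HB Hb. inversion HT; subst.
    pose proof (F_ge (SDecl t x) b).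
    assert (Hv : forall z, (if is_Int t then VInt 0 else VBool false) = VInt z -> Z.abs z <= 2 ^ F (SDecl t x) b).
    { intros z Hz. destruct t; simpl in Hz; inversion Hz; subst; simpl; apply Z.pow_nonneg; lia. }
    split.
    + apply Bnd_updv; auto. eapply Bnd_mono; eauto.
    + apply IInv_upd; auto. eapply IInv_mono; eauto.
  - intros S x e v Hn He G G' l b HT HI HB Hb. inversion HT; subst.
    pose proof (ek_nonneg e).
    assert (Hle : b + ek e <= F (SAssign x e) b) by (cbn [F]; lia).
    assert (Hv : forall z, v = VInt z -> Z.abs z <= 2 ^ F (SAssign x e) b).
    { intros z Hz; subst. pose proof (eval_bound _ _ _ _ HB Hb He).
      pose proof (mul_pow _ _ _ H Hb H0). pose proof (pow_mono (b + ek e) (F (SAssign x e) b)). lia. }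
    split.
    + apply Bnd_updv; auto. eapply Bnd_mono; eauto; lia.
    + apply IInv_updS; auto. eapply IInv_mono; eauto; lia.
  - intros S ss S' Hs IH G G' l b HT HI HB Hb. inversion HT; subst.
    match goal with Hq : seq_type _ _ ss _ |- _ => destruct (IH _ _ _ _ Hq HI HB Hb) as [HB1 HI1] end.
    pose proof (Fseq_ge ss b).
    assert (Fseq ss b <= F (SBlock ss) b) by (cbn [F]; unfold Fseq; lia).
    split.
    + eapply Bnd_mono; eauto; lia.
    + eapply IInv_sub. eapply IInv_mono; eauto; lia. intros; eapply (proj2 ty_ext); eauto.
  - intros S e s1 s2 S' He Hs IH G G' l b HT HI HB Hb. inversion HT; subst.
    match goal with Hq : stmt_type _ _ s1 _ |- _ => destruct (IH _ _ _ _ Hq HI HB Hb) as [HB1 HI1] end.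
    pose proof (F_ge s1 b).
    assert (F s1 b <= F (SIf e s1 s2) b) by (cbn [F]; lia).
    split.
    + eapply Bnd_mono; eauto; lia.
    + eapply IInv_sub. eapply IInv_mono; eauto; lia. intros; eapply (proj1 ty_ext); eauto.
  - intros S e s1 s2 S' He Hs IH G G' l b HT HI HB Hb. inversion HT; subst.
    match goal with Hq : stmt_type _ _ s2 _ |- _ => destruct (IH _ _ _ _ Hq HI HB Hb) as [HB1 HI1] end.
    pose proof (F_ge s2 b).
    assert (F s2 b <= F (SIf e s1 s2) b) by (cbn [F]; lia).
    split.
    + eapply Bnd_mono; eauto; lia.
    + eapply IInv_sub. eapply IInv_mono; eauto; lia. intros; eapply (proj1 ty_ext); eauto.
  - intros S x e s i S' He Hl _ G G' l b HT HI HB Hb. inversion HT; subst.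
    pose proof (loop_count _ _ _ _ _ _ H4 HI Hb He) as Hi.
    pose proof (ek_nonneg e) as Hek.
    pose proof (g_nonneg s (b + ek e + 1)) as Hg.
    pose proof (proj2 (proj2 lemA) _ _ _ _ _ _ Hl G' G'0 (b + ek e + 1) (b + ek e + 1) H7 H6) as IH.
    rewrite Nat.sub_0_r in IH. rewrite Z2Nat.id in IH by lia.
    assert (Hle : b + ek e + 1 + (b + ek e + 1) * g s (b + ek e + 1) <= F (SFor x e s) b).
    { cbn [F]. rewrite g_for. lia. }
    split.
    + eapply Bnd_mono. apply IH.
      * eapply IInv_mono; eauto; lia.
      * eapply Bnd_mono; eauto; lia.
      * lia.
      * lia.
      * nia.
    + intros y z Hy Hz. rewrite (proj2 (proj2 frozen) _ _ _ _ _ _ Hl G' G'0 H7 H6 y Hy) in Hz.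
      pose proof (HI y z Hy Hz). pose proof (pow_mono b (F (SFor x e s) b)). pose proof (F_ge (SFor x e s) b). lia.
  - intros S G G' l b HT HI HB Hb. inversion HT; subst. unfold Fseq; simpl. auto.
  - intros S s ss S1 S2 Hs IH Hss IH2 G G' l b HT HI HB Hb. inversion HT; subst.
    match goal with Hq : stmt_type _ _ s _ |- _ => destruct (IH _ _ _ _ Hq HI HB Hb) as [HB1 HI1] end.
    pose proof (F_ge s b).
    match goal with Hq : seq_type _ _ ss _ |- _ => destruct (IH2 _ _ _ (F s b) Hq HI1 HB1 ltac:(lia)) as [HB2 HI2] end.
    unfold Fseq; simpl. auto.
Qed.

Definition PB (f : Z -> Z) : Prop :=
  exists a k, 0 <= a /\ 0 <= k /\ forall x, 0 <= x -> f x <= a * (x + 1) ^ k.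

Lemma pw_ge1 x k : 0 <= x -> 0 <= k -> 1 <= (x + 1) ^ k.
Proof. intros. replace 1 with ((x+1)^0) by reflexivity. apply Z.pow_le_mono_r; lia. Qed.

Lemma pw_mono x k K : 0 <= x -> 0 <= k <= K -> (x + 1) ^ k <= (x + 1) ^ K.
Proof. intros. apply Z.pow_le_mono_r; lia. Qed.

Lemma PB_le f h : (forall x, 0 <= x -> f x <= h x) -> PB h -> PB f.
Proof.
  intros H [a [k [Ha [Hk Hb]]]]. exists a, k. repeat split; auto.
  intros x Hx. specialize (H x Hx). specialize (Hb x Hx). lia.
Qed.

Lemma PB_ext f h : (forall x, 0 <= x -> f x = h x) -> PB h -> PB f.
Proof. intros H. apply PB_le. intros x Hx. rewrite H; auto. lia. Qed.

Lemma PB_const c : PB (fun _ => c).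
Proof.
  exists (Z.max 0 c), 0. repeat split; try lia; intros x Hx; simpl; lia.
Qed.

Lemma PB_id : PB (fun x => x).
Proof. exists 1, 1. repeat split; try lia; intros x Hx; rewrite Z.pow_1_r; lia. Qed.

Lemma PB_add f h : PB f -> PB h -> PB (fun x => f x + h x).
Proof.
  intros [a1 [k1 [Ha1 [Hk1 Hb1]]]] [a2 [k2 [Ha2 [Hk2 Hb2]]]].
  exists (a1 + a2), (Z.max k1 k2). repeat split; try lia.
  intros x Hx. specialize (Hb1 x Hx). specialize (Hb2 x Hx).
  pose proof (pw_mono x k1 (Z.max k1 k2) Hx ltac:(lia)).
  pose proof (pw_mono x k2 (Z.max k1 k2) Hx ltac:(lia)).
  nia.
Qed.

Lemma PB_max f h : PB f -> PB h -> PB (fun x => Z.max (f x) (h x)).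
Proof.
  intros H1 H2. destruct (PB_add f h H1 H2) as [a [k [Ha [Hk Hb]]]].
  destruct H1 as [a1 [k1 [Ha1 [Hk1 Hb1]]]]. destruct H2 as [a2 [k2 [Ha2 [Hk2 Hb2]]]].
  exists (a1 + a2), (Z.max k1 k2). repeat split; try lia.
  intros x Hx. specialize (Hb1 x Hx). specialize (Hb2 x Hx).
  pose proof (pw_mono x k1 (Z.max k1 k2) Hx ltac:(lia)).
  pose proof (pw_mono x k2 (Z.max k1 k2) Hx ltac:(lia)).
  pose proof (pw_ge1 x k1 Hx Hk1). pose proof (pw_ge1 x k2 Hx Hk2).
  nia.
Qed.

Lemma PB_mul f h : (forall x, 0 <= x -> 0 <= f x) -> (forall x, 0 <= x -> 0 <= h x) ->
  PB f -> PB h -> PB (fun x => f x * h x).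
Proof.
  intros Hf Hh [a1 [k1 [Ha1 [Hk1 Hb1]]]] [a2 [k2 [Ha2 [Hk2 Hb2]]]].
  exists (a1 * a2), (k1 + k2). repeat split; try nia.
  intros x Hx. specialize (Hb1 x Hx). specialize (Hb2 x Hx).
  specialize (Hf x Hx). specialize (Hh x Hx).
  rewrite Z.pow_add_r by lia.
  pose proof (pw_ge1 x k1 Hx Hk1). pose proof (pw_ge1 x k2 Hx Hk2).
  assert (f x * h x <= (a1 * (x + 1) ^ k1) * (a2 * (x + 1) ^ k2)) by (apply Z.mul_le_mono_nonneg; lia).
  nia.
Qed.

Lemma PB_comp f h : (forall x, 0 <= x -> 0 <= h x) -> PB f -> PB h -> PB (fun x => f (h x)).
Proof.
  intros Hh [a1 [k1 [Ha1 [Hk1 Hb1]]]] [a2 [k2 [Ha2 [Hk2 Hb2]]]].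
  exists (a1 * (a2 + 1) ^ k1), (k2 * k1). repeat split.
  - apply Z.mul_nonneg_nonneg; auto. apply Z.pow_nonneg; lia.
  - nia.
  - intros x Hx. pose proof (Hh x Hx). specialize (Hb1 (h x) H). specialize (Hb2 x Hx).
    pose proof (pw_ge1 x k2 Hx Hk2).
    assert (h x + 1 <= (a2 + 1) * (x + 1) ^ k2) by nia.
    assert ((h x + 1) ^ k1 <= ((a2 + 1) * (x + 1) ^ k2) ^ k1) by (apply Z.pow_le_mono_l; lia).
    rewrite Z.pow_mul_l in H2. rewrite <- Z.pow_mul_r in H2 by lia.
    assert (a1 * (h x + 1) ^ k1 <= a1 * ((a2 + 1) ^ k1 * (x + 1) ^ (k2 * k1))) by (apply Z.mul_le_mono_nonneg_l; lia).
    lia.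
Qed.

Lemma stmt_ind2 (P : stmt -> Prop)
  (HD : forall t x, P (SDecl t x))
  (HA : forall x e, P (SAssign x e))
  (HB : forall ss, Forall P ss -> P (SBlock ss))
  (HI : forall e s1 s2, P s1 -> P s2 -> P (SIf e s1 s2))
  (HF : forall x e s, P s -> P (SFor x e s)) : forall s, P s.
Proof.
  fix IH 1. intros s. destruct s.
  - apply HD.
  - apply HA.
  - apply HB. exact ((fix go (l : list stmt) : Forall P l :=
      match l with [] => Forall_nil _ | s' :: l' => Forall_cons _ (IH s') (go l') end) ss).
  - apply HI; apply IH.
  - apply HF; apply IH.
Qed.

Lemma F_nonneg s b : 0 <= b -> 0 <= F s b.
Proof. pose proof (F_ge s b). lia. Qed.

Lemma PB_all : forall s, PB (g s) /\ PB (F s).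
Proof.
  apply stmt_ind2.
  - intros t x. split.
    + apply PB_ext with (h := fun _ => 0). intros; reflexivity. apply PB_const.
    + apply PB_ext with (h := fun x => x). intros; cbn [F]; lia. apply PB_id.
  - intros x e. pose proof (ek_nonneg e). split.
    + apply PB_ext with (h := fun _ => ek e). intros; cbn [g]; lia. apply PB_const.
    + apply PB_ext with (h := fun b => b + ek e). intros; cbn [F]; lia. apply PB_add. apply PB_id. apply PB_const.
  - intros ss Hall.
    assert (Hg : PB (gseq ss)).
    { induction Hall.
      - apply PB_ext with (h := fun _ => 0). intros; reflexivity. apply PB_const.
      - apply PB_ext with (h := fun c => g x c + gseq l c). intros; reflexivity.
        apply PB_add; tauto. }
    assert (Hf : PB (Fseq ss)).
    { clear Hg. induction Hall.
      - apply PB_ext with (h := fun x => x). intros; reflexivity. apply PB_id.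
      - apply PB_ext with (h := fun b => Fseq l (F x b)). intros; reflexivity.
        apply PB_comp; [intros; apply F_nonneg; auto | tauto | tauto]. }
    split.
    + apply PB_ext with (h := fun c => Z.max 0 (gseq ss c)). intros; reflexivity.
      apply PB_max; auto. apply PB_const.
    + apply PB_ext with (h := fun b => Z.max b (Fseq ss b)). intros; reflexivity.
      apply PB_max; auto. apply PB_id.
  - intros e s1 s2 [H1 H2] [H3 H4]. split.
    + apply PB_ext with (h := fun c => Z.max 0 (g s1 c + g s2 c)). intros; reflexivity.
      apply PB_max. apply PB_const. apply PB_add; auto.
    + apply PB_ext with (h := fun b => Z.max b (Z.max (F s1 b) (F s2 b))). intros; reflexivity.
      apply PB_max. apply PB_id. apply PB_max; auto.
  - intros x e s [H1 H2]. pose proof (ek_nonneg e).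
    assert (Hg : PB (g (SFor x e s))).
    { apply PB_ext with (h := fun c => Z.max 0 (ek e + 1 + (c + ek e + 1) * g s (c + ek e + 1))).
      intros; reflexivity.
      apply PB_max. apply PB_const. apply PB_add. apply PB_const.
      apply PB_mul.
      - intros; lia.
      - intros; apply g_nonneg.
      - apply PB_add. apply PB_add. apply PB_id. apply PB_const. apply PB_const.
      - apply PB_comp with (h := fun c => c + ek e + 1). intros; lia. auto.
        apply PB_add. apply PB_add. apply PB_id. apply PB_const. apply PB_const. }
    split; auto.
    apply PB_ext with (h := fun b => Z.max b (b + g (SFor x e s) b)). intros; reflexivity.
    apply PB_max. apply PB_id. apply PB_add. apply PB_id. auto.
Qed.

Lemma peval_mono_term n d x : peval (repeat 0 n ++ [d]) x = d * x ^ Z.of_nat n.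
Proof.
  induction n; cbn [repeat app peval fold_right]. lia. fold (peval (repeat 0 n ++ [d]) x). rewrite IHn. rewrite Nat2Z.inj_succ, Z.pow_succ_r by lia. lia.
Qed.

Lemma pw_split x m : 0 <= x -> 0 <= m -> (x + 1) ^ m <= 2 ^ m * (1 + x ^ m).
Proof.
  intros Hx Hm. destruct (Z.eq_dec x 0) as [->|Hn].
  - replace (0 + 1) with 1 by lia. rewrite Z.pow_1_l by lia. pose proof (Z.pow_nonneg 0 m ltac:(lia)).
    pose proof (pw_ge1 1 m ltac:(lia) Hm). replace (1 + 1) with 2 in H0 by lia. nia.
  - assert ((x + 1) ^ m <= (2 * x) ^ m) by (apply Z.pow_le_mono_l; lia).
    rewrite Z.pow_mul_l in H. pose proof (Z.pow_nonneg 2 m ltac:(lia)). nia.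
Qed.

Lemma poly_final a k C : 0 <= a -> 0 <= k ->
  exists q, forall x, 0 <= x -> a * (x + 1) ^ k + C <= peval q x.
Proof.
  intros Ha Hk. set (d := a * 2 ^ (k + 1)).
  exists ((d + C) :: repeat 0 (Z.to_nat k) ++ [d]).
  intros x Hx. cbn [peval fold_right]. fold (peval (repeat 0 (Z.to_nat k) ++ [d]) x).
  rewrite peval_mono_term. rewrite Z2Nat.id by lia.
  assert ((x + 1) ^ k <= (x + 1) ^ (k + 1)) by (apply pw_mono; lia).
  pose proof (pw_split x (k + 1) Hx ltac:(lia)).
  rewrite (Z.pow_add_r x k 1), Z.pow_1_r in H0 by lia.
  assert (a * (x + 1) ^ k <= a * (2 ^ (k + 1) * (1 + x ^ k * x))).
  { apply Z.mul_le_mono_nonneg_l; auto. lia. }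
  unfold d. nia.
Qed.

Lemma init_tenv_no_iint xs y : init_tenv xs y <> Some TIint.
Proof.
  induction xs; simpl. unfold empty; discriminate.
  unfold upd. destruct (Nat.eqb y a); auto. discriminate.
Qed.

Lemma sz_tuple_nonneg vs : 0 <= sz_tuple vs.
Proof. induction vs; simpl. lia. pose proof (sz_nonneg a). lia. Qed.

Lemma init_store_bnd xs vs : Bnd (sz_tuple vs) (init_store xs vs).
Proof.
  revert vs; induction xs; intros vs; simpl.
  - intros y z H. discriminate.
  - destruct vs as [|v vs]. intros y z H; discriminate.
    simpl. pose proof (sz_nonneg v). pose proof (sz_tuple_nonneg vs). apply Bnd_upd.
    + eapply Bnd_mono; eauto; lia.
    + pose proof (abs_le_pow_sz v). pose proof (pow_mono (sz v) (sz v + sz_tuple vs)). lia.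
Qed.

Theorem proposition2 :
  forall p : program, well_typed p ->
  exists q : list Z, forall (vs : list Z) (z : Z),
    runs p vs z -> sz z <= peval q (sz_tuple vs).
Proof.
  intros p [G' [t [Hseq [Hret Hint]]]].
  assert (HF : PB (Fseq (body p))).
  { clear Hseq Hret Hint. induction (body p).
    - apply PB_ext with (h := fun x => x). intros; reflexivity. apply PB_id.
    - apply PB_ext with (h := fun b => Fseq l (F a b)). intros; reflexivity.
      apply PB_comp; auto. intros; apply F_nonneg; auto. apply (proj2 (PB_all a)). }
  destruct HF as [a [k [Ha [Hk Hb]]]].
  destruct (poly_final a k (ek (ret p) + 1) Ha Hk) as [q Hq].
  exists q. intros vs z [Hlen [S' [Hex Hev]]].
  pose proof (sz_tuple_nonneg vs) as Hb0.
  assert (HI : IInv (sz_tuple vs) (init_tenv (params p)) (init_store (params p) vs)).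
  { intros y w Hy. exfalso. eapply init_tenv_no_iint; eauto. }
  destruct (proj1 (proj2 lemB) _ _ _ Hex _ _ _ _ Hseq HI (init_store_bnd _ _) Hb0) as [HB _].
  pose proof (Fseq_ge (body p) (sz_tuple vs)).
  assert (HF0 : 0 <= Fseq (body p) (sz_tuple vs)) by lia.
  pose proof (eval_bound _ _ _ _ HB HF0 Hev).
  pose proof (ek_nonneg (ret p)).
  pose proof (mul_pow _ _ _ H1 HF0 H0).
  assert (HF1 : 0 <= Fseq (body p) (sz_tuple vs) + ek (ret p)) by lia.
  pose proof (sz_le_of_abs z _ HF1 H2).
  specialize (Hb _ Hb0). specialize (Hq _ Hb0). lia.
Qed.
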